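(* Let $C_e:=\min\{\tfrac12(\rho/\bar v)^2,\ \tfrac{\sqrt2}{4}(\rho/\bar v)\}$. Under partial information feedback, for any $t\ge2$, the OGD-CB algorithm guarantees $|\mathcal I_t|\ge C_e\,(t-1)$.
   Context: Model: constants $\bar v>0$, $\rho\in(0,\bar v]$; $T$ rounds; budget $B=\rho T$. Round $t$: value $v_t\in[0,\bar v]$, highest competing bid $p_t\in[0,\bar v]$; buyer picks $x_t\in\{0,1\}$, pays $x_tc_t$ with $c_t=p_t\mathbf 1[v_t\ge p_t]$. Partial information feedback: $p_t$ is observed at the end of round $t$ only if $x_t=1$. OGD-CB algorithm: $\mathcal I_1=\emptyset$, $B_1=B$, $\lambda_1=0$. For $t=1,\dots,T$: observe $v_t$. If $t=1$: $x_1=1$, $\lambda_2=\lambda_1$. Otherwise: $\epsilon_t=\sqrt{(\ln 2+2\ln T)/(2|\mathcal I_t|)}$; $\tilde r_t(v)=\frac1{|\mathcal I_t|}\sum_{\tau\in\mathcal I_t}(v-p_\tau)^++\epsilon_tv$; $\tilde c_t(v)=\frac1{|\mathcal I_t|}\sum_{\tau\in\mathcal I_t}p_\tau\mathbf 1[v\ge p_\tau]-2\epsilon_tv$; $x_t=\mathbf 1[\tilde r_t(v_t)\ge\lambda_t\tilde c_t(v_t)]$; $\eta_t=1/(\bar v\sqrt t)$; $\lambda_{t+1}=(\lambda_t+\eta_t(x_t\tilde c_t(v_t)-\rho))^+$. If $x_t=1$, observe $p_t$ and set $\mathcal I_{t+1}=\mathcal I_t\cup\{t\}$, else $\mathcal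 I_{t+1}=\mathcal I_t$. Set $B_{t+1}=B_t-x_tc_t$; if $B_{t+1}<\bar v$, stop. *)

(* Defs.v *)
From Stdlib Require Import Reals Lra List.
Import ListNotations.
Open Scope R_scope.

(* State of OGD-CB before a round: observed index set I_t (list of past
   rounds where the buyer bid), dual variable lambda_t, remaining budget B_t. *)
Record ogd_state := mkSt { sI : list nat; sLam : R; sB : R }.

Section OGD.
Variables (vbar rho : R) (T : nat) (v p : nat -> R).

Definition cost (t : nat) : R := if Rle_dec (p t) (v t) then p t else 0.

Definition sumI (I : list nat) (f : nat -> R) : R :=
  fold_right (fun tau acc => f tau + acc) 0 I.

Definition eps_t (I : list nat) : R :=
  sqrt ((ln 2 + 2 * ln (INR T)) / (2 * INR (length I))).

Definition r_tilde (I : list nat) (x : R) : R :=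
  sumI I (fun tau => Rmax (x - p tau) 0) / INR (length I) + eps_t I * x.

Definition c_tilde (I : list nat) (x : R) : R :=
  sumI I (fun tau => if Rle_dec (p tau) x then p tau else 0) / INR (length I)
  - 2 * eps_t I * x.

Definition decide (t : nat) (s : ogd_state) : bool :=
  if Nat.eqb t 1 then true
  else if Rle_dec (sLam s * c_tilde (sI s) (v t)) (r_tilde (sI s) (v t))
       then true else false.

Definition eta (t : nat) : R := 1 / (vbar * sqrt (INR t)).

Definition step (t : nat) (s : ogd_state) : ogd_state :=
  let x := decide t s in
  let xr := if x then 1 else 0 in
  let lam' := if Nat.eqb t 1 then sLam s
              else Rmax (sLam s + eta t * (xr * c_tilde (sI s) (v t) - rho)) 0 in
  let I' := if x then t :: sI s else sI s in
  mkSt I' lam' (sB s - xr * cost t).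

(* ogd_pre n = state before round n+1; initial state I_1 = {}, lambda_1 = 0,
   B_1 = rho T *)
Fixpoint ogd_pre (n : nat) : ogd_state :=
  match n with
  | O => mkSt [] 0 (rho * INR T)
  | S m => step (S m) (ogd_pre m)
  end.

Definition ogd_state_at (t : nat) : ogd_state := ogd_pre (t - 1).

End OGD.

Definition C_e (vbar rho : R) : R :=
  Rmin (/2 * (rho / vbar) ^ 2) (sqrt 2 / 4 * (rho / vbar)).

(* Main.v *)
Require Import Defs.
From Stdlib Require Import Reals List.
From Stdlib Require Import Lra Lia Psatz.
Import ListNotations.
Open Scope R_scope.

Lemma sumI_nonneg I f : (forall x, 0 <= f x) -> 0 <= sumI I f.
Proof. intros H; induction I as [|a I IH]; simpl; [lra| specialize (H a); lra]. Qed.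

Lemma sumI_le I f c : (forall x, f x <= c) -> sumI I f <= INR (length I) * c.
Proof.
  intros H; induction I as [|a I IH]; simpl sumI; simpl length.
  - simpl. lra.
  - rewrite S_INR. specialize (H a). rewrite Rmult_plus_distr_r, Rmult_1_l. lra.
Qed.

Lemma eps_nonneg T I : 0 <= eps_t T I.
Proof. unfold eps_t. apply sqrt_pos. Qed.

Lemma c_tilde_le T p I x : (1 <= length I)%nat -> 0 <= x -> c_tilde T p I x <= x.
Proof.
  intros Hl Hx. unfold c_tilde.
  pose proof (eps_nonneg T I) as He.
  assert (HL : 1 <= INR (length I)) by (apply (le_INR 1); lia).
  assert (HS : sumI I (fun tau => if Rle_dec (p tau) x then p tau else 0)
               <= INR (length I) * x).
  { apply sumI_le. intros y. destruct (Rle_dec (p y) x); lra. }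
  assert (Hd : sumI I (fun tau => if Rle_dec (p tau) x then p tau else 0) / INR (length I) <= x).
  { apply Rmult_le_reg_r with (INR (length I)); [lra|].
    unfold Rdiv. rewrite Rmult_assoc, Rinv_l by lra. lra. }
  assert (0 <= 2 * eps_t T I * x) by (apply Rmult_le_pos; lra).
  lra.
Qed.

Lemma r_tilde_ge T p I x : (1 <= length I)%nat -> 0 <= x -> eps_t T I * x <= r_tilde T p I x.
Proof.
  intros Hl Hx. unfold r_tilde.
  assert (HL : 1 <= INR (length I)) by (apply (le_INR 1); lia).
  assert (0 <= sumI I (fun tau => Rmax (x - p tau) 0) / INR (length I)).
  { unfold Rdiv. apply Rmult_le_pos.
    - apply sumI_nonneg. intros; apply Rmax_r.
    - left. apply Rinv_0_lt_compat. lra. }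
  lra.
Qed.

Lemma len_le vbar rho T v p k : (length (sI (ogd_pre vbar rho T v p k)) <= k)%nat.
Proof.
  induction k as [|k IH]; simpl; [lia|].
  unfold step. destruct (decide T v p (S k) (ogd_pre vbar rho T v p k)); simpl; lia.
Qed.

Lemma len_ge1 vbar rho T v p k : (1 <= length (sI (ogd_pre vbar rho T v p (S k))))%nat.
Proof.
  induction k as [|k IH].
  - simpl. unfold step, decide. simpl. lia.
  - change (ogd_pre vbar rho T v p (S (S k))) with
      (step vbar rho T v p (S (S k)) (ogd_pre vbar rho T v p (S k))).
    unfold step. cbn zeta. destruct (decide T v p (S (S k)) (ogd_pre vbar rho T v p (S k))); cbn [sI length]; lia.
Qed.

Lemma lam_nonneg vbar rho T v p k : 0 <= sLam (ogd_pre vbar rho T v p k).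
Proof.
  induction k as [|k IH]; [simpl; lra|].
  change (ogd_pre vbar rho T v p (S k)) with (step vbar rho T v p (S k) (ogd_pre vbar rho T v p k)).
  unfold step. cbn zeta. destruct (Nat.eqb (S k) 1); cbn [sLam]; [assumption| apply Rmax_r].
Qed.

Lemma ln_ge1 x : 3 <= x -> 1 <= ln x.
Proof.
  intros H. pose proof exp_le_3.
  destruct (Rle_lt_or_eq_dec (exp 1) x) as [Hl|He]; [lra| |].
  - left. rewrite <- (ln_exp 1). apply ln_increasing; [apply exp_pos|exact Hl].
  - rewrite <- He, ln_exp. lra.
Qed.

Lemma ln2_pos : 0 <= ln 2.
Proof. rewrite <- ln_1. left. apply ln_increasing; lra. Qed.

Lemma sq1 x y : 0 <= x -> x + 1 <= y -> 1 / sqrt y <= 2 * (sqrt (x + 1) - sqrt x).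
Proof.
  intros Hx Hy.
  pose proof (sqrt_sqrt (x+1) ltac:(lra)) as HA.
  pose proof (sqrt_sqrt x Hx) as HB.
  pose proof (sqrt_pos x) as HB0.
  assert (HA0 : 0 < sqrt (x+1)) by (apply sqrt_lt_R0; lra).
  assert (Hq : sqrt (x+1) <= sqrt y) by (apply sqrt_le_1_alt; lra).
  apply Rle_trans with (1 / sqrt (x+1)).
  - unfold Rdiv. rewrite !Rmult_1_l. apply Rinv_le_contravar; lra.
  - apply Rmult_le_reg_r with (sqrt (x+1)); [lra|].
    replace (1 / sqrt (x + 1) * sqrt (x + 1)) with 1 by (field; lra).
    nra.
Qed.

Lemma sq2 y : 0 < y -> 2 * (sqrt (y + 1) - sqrt y) <= 1 / sqrt y.
Proof.
  intros Hy.
  pose proof (sqrt_sqrt (y+1) ltac:(lra)) as HA.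
  pose proof (sqrt_sqrt y ltac:(lra)) as HB.
  assert (HB0 : 0 < sqrt y) by (apply sqrt_lt_R0; lra).
  pose proof (sqrt_pos (y+1)).
  apply Rmult_le_reg_r with (sqrt y); [lra|].
  replace (1 / sqrt y * sqrt y) with 1 by (field; lra).
  nra.
Qed.

Lemma a_bounds vbar rho : 0 < vbar -> 0 < rho -> rho <= vbar -> 0 < rho / vbar <= 1.
Proof.
  intros. split.
  - unfold Rdiv. apply Rmult_lt_0_compat; [lra|apply Rinv_0_lt_compat; lra].
  - apply Rmult_le_reg_r with vbar; [lra|]. unfold Rdiv.
    rewrite Rmult_assoc, Rinv_l by lra. lra.
Qed.

Lemma step_case vbar rho T v p n s :
  0 < vbar -> 0 < rho -> rho <= vbar -> (2 <= n)%nat -> (3 <= T)%nat ->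
  0 <= v n <= vbar -> (1 <= length (sI s))%nat -> (length (sI s) < n)%nat ->
  0 <= sLam s ->
  (sI (step vbar rho T v p n s) = n :: sI s /\
   sLam (step vbar rho T v p n s) <= sLam s + (1 - rho/vbar) / sqrt (INR n)) \/
  (sI (step vbar rho T v p n s) = sI s /\
   sLam (step vbar rho T v p n s) = sLam s - (rho/vbar) / sqrt (INR n)).
Proof.
  intros Hv Hr Hrv Hn HT Hvn Hl1 Hln Hlam.
  pose proof (a_bounds vbar rho Hv Hr Hrv) as Ha.
  unfold step, decide. cbn zeta.
  assert (Hneq : Nat.eqb n 1 = false) by (apply Nat.eqb_neq; lia). rewrite Hneq.
  assert (Hn0 : 0 < INR n) by (apply lt_0_INR; lia).
  assert (Hq : 0 < sqrt (INR n)) by (apply sqrt_lt_R0; lra).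
  assert (Hc : c_tilde T p (sI s) (v n) <= v n) by (apply c_tilde_le; [lia|lra]).
  pose proof (r_tilde_ge T p (sI s) (v n) Hl1 (proj1 Hvn)) as Hrt.
  pose proof (eps_nonneg T (sI s)) as He.
  destruct (Rle_dec (sLam s * c_tilde T p (sI s) (v n)) (r_tilde T p (sI s) (v n)))
    as [Hle|Hgt]; cbn [sI sLam].
  - left. split; [reflexivity|]. apply Rmax_lub.
    + unfold eta.
      replace ((1 - rho / vbar) / sqrt (INR n)) with ((vbar - rho) * (1 / (vbar * sqrt (INR n))))
        by (field; lra).
      apply Rplus_le_compat_l. rewrite Rmult_1_l, (Rmult_comm (vbar - rho)).
      apply Rmult_le_compat_l; [|lra].
      unfold Rdiv. rewrite Rmult_1_l. left. apply Rinv_0_lt_compat. nra.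
    + assert (0 <= (1 - rho / vbar) / sqrt (INR n)).
      { unfold Rdiv. apply Rmult_le_pos; [lra|]. left; apply Rinv_0_lt_compat; lra. }
      lra.
  - right. split; [reflexivity|].
    assert (Hlam_eps : eps_t T (sI s) < sLam s).
    { destruct (Rlt_le_dec (eps_t T (sI s)) (sLam s)) as [H|H]; [exact H|].
      exfalso. apply Hgt.
      apply Rle_trans with (sLam s * v n); [apply Rmult_le_compat_l; lra|].
      apply Rle_trans with (eps_t T (sI s) * v n); [apply Rmult_le_compat_r; lra|].
      exact Hrt. }
    assert (Hepsa : rho / vbar / sqrt (INR n) <= eps_t T (sI s)).
    { apply Rle_trans with (1 / sqrt (INR n)).
      - unfold Rdiv. apply Rmult_le_compat_r; [left; apply Rinv_0_lt_compat; lra|lra].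
      - rewrite <- sqrt_1, <- sqrt_div by lra. unfold eps_t. apply sqrt_le_1_alt.
        set (m := length (sI s)) in *.
        assert (Hm : 1 <= INR m) by (apply (le_INR 1); lia).
        assert (Hmn : INR m <= INR n) by (apply le_INR; lia).
        assert (HL : 2 <= ln 2 + 2 * ln (INR T)).
        { pose proof ln2_pos. assert (1 <= ln (INR T)).
          { apply ln_ge1. apply (le_INR 3) in HT. simpl in HT. lra. }
          lra. }
        unfold Rdiv. rewrite Rmult_1_l, Rinv_mult.
        apply Rle_trans with (/ INR m); [apply Rinv_le_contravar; lra|].
        assert (0 < / INR m) by (apply Rinv_0_lt_compat; lra).
        nra. }
    rewrite Rmax_left.
    + unfold eta. field. lra.
    + unfold eta. replace (sLam s + 1 / (vbar * sqrt (INR n)) * ((if false then 1 else 0) * c_tilde T p (sI s) (v n) - rho))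
        with (sLam s - rho / vbar / sqrt (INR n)) by (simpl; field; lra).
      lra.
Qed.

Lemma invariant vbar rho T v p t :
  0 < vbar -> 0 < rho -> rho <= vbar ->
  (forall t, (1 <= t <= T)%nat -> 0 <= v t <= vbar) ->
  (2 <= t <= T)%nat ->
  forall k, (1 <= k)%nat -> (k <= t - 1)%nat ->
  sLam (ogd_pre vbar rho T v p k) <=
    2 * (sqrt (INR (length (sI (ogd_pre vbar rho T v p k)))) - 1)
    - 2 * (rho / vbar) * (sqrt (INR k + 1) - sqrt 2).
Proof.
  intros Hv Hr Hrv Hvb Ht k.
  pose proof (a_bounds vbar rho Hv Hr Hrv) as Ha.
  induction k as [|k IH]; intros Hk1 Hkt; [lia|].
  destruct (Nat.eq_dec k 0) as [->|Hk0].
  - simpl. unfold step, decide. simpl.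
    replace (1 + 1) with 2 by ring. rewrite sqrt_1. lra.
  - specialize (IH ltac:(lia) ltac:(lia)).
    change (ogd_pre vbar rho T v p (S k)) with (step vbar rho T v p (S k) (ogd_pre vbar rho T v p k)).
    set (s := ogd_pre vbar rho T v p k) in *.
    assert (Hl1 : (1 <= length (sI s))%nat).
    { unfold s. destruct k; [lia|]. apply len_ge1. }
    assert (Hll : (length (sI s) <= k)%nat) by (unfold s; apply len_le).
    assert (Hlam : 0 <= sLam s) by (unfold s; apply lam_nonneg).
    assert (Hkn : INR (S k) = INR k + 1) by apply S_INR.
    set (m := length (sI s)) in *.
    assert (Hm : 1 <= INR m) by (apply (le_INR 1); lia).
    assert (Hmk : INR m + 1 <= INR (S k)) by (rewrite <- S_INR; apply le_INR; lia).
    assert (Hk1' : 1 <= INR k) by (apply (le_INR 1); lia).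
    pose proof (sq1 (INR m) (INR (S k)) ltac:(lra) Hmk) as H1.
    pose proof (sq2 (INR (S k)) ltac:(lra)) as H2.
    assert (Hsqp : 0 < sqrt (INR (S k))) by (apply sqrt_lt_R0; lra).
    assert (H2a : rho / vbar * (2 * (sqrt (INR (S k) + 1) - sqrt (INR (S k))))
                  <= rho / vbar * (1 / sqrt (INR (S k)))) by (apply Rmult_le_compat_l; lra).
    destruct (step_case vbar rho T v p (S k) s Hv Hr Hrv ltac:(lia) ltac:(lia)
               (Hvb (S k) ltac:(lia)) Hl1 ltac:(lia) Hlam) as [[HI HL]|[HI HL]];
      rewrite HI.
    + cbn [length]. rewrite S_INR. rewrite <- Hkn in IH.
      replace ((1 - rho / vbar) / sqrt (INR (S k))) with
        (1 / sqrt (INR (S k)) - rho / vbar * (1 / sqrt (INR (S k)))) in HL by (field; repeat split; intro; lra).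
      fold m. lra.
    + fold m. rewrite <- Hkn in IH.
      replace (rho / vbar / sqrt (INR (S k))) with
        (rho / vbar * (1 / sqrt (INR (S k)))) in HL by (field; repeat split; intro; lra).
      assert (0 <= 1 / sqrt (INR (S k))).
      { unfold Rdiv. rewrite Rmult_1_l. left. apply Rinv_0_lt_compat, sqrt_lt_R0. lra. }
      assert (sqrt (INR m) <= sqrt (INR m + 1)) by (apply sqrt_le_1_alt; lra).
      lra.
Qed.

Theorem lemma5 (vbar rho : R) (T : nat) (v p : nat -> R) :
  0 < vbar -> 0 < rho -> rho <= vbar ->
  (forall t, (1 <= t <= T)%nat -> 0 <= v t <= vbar) ->
  (forall t, (1 <= t <= T)%nat -> 0 <= p t <= vbar) ->
  forall t : nat, (2 <= t <= T)%nat ->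
  (* the algorithm has not stopped before round t:
     B_{s+1} >= vbar for every round s = 1, ..., t-1 *)
  (forall s : nat, (1 <= s < t)%nat ->
     vbar <= sB (ogd_state_at vbar rho T v p (s + 1))) ->
  C_e vbar rho * INR (t - 1)
    <= INR (length (sI (ogd_state_at vbar rho T v p t))).
Proof.
  intros Hv Hr Hrv Hvb Hpb t Ht _.
  unfold ogd_state_at.
  pose proof (invariant vbar rho T v p t Hv Hr Hrv Hvb Ht (t - 1) ltac:(lia) ltac:(lia)) as Hi.
  pose proof (lam_nonneg vbar rho T v p (t - 1)) as H0.
  pose proof (a_bounds vbar rho Hv Hr Hrv) as Ha.
  set (m := length (sI (ogd_pre vbar rho T v p (t - 1)))) in *.
  set (a := rho / vbar) in *.
  assert (Htm : INR (t - 1) + 1 = INR t) by (rewrite minus_INR by lia; simpl; ring).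
  rewrite Htm in Hi.
  assert (Ht2 : 2 <= INR t) by (apply (le_INR 2) ; lia).
  set (U := sqrt (INR t)) in *.
  set (r := sqrt 2) in *.
  set (X := sqrt (INR m)) in *.
  assert (HU : U * U = INR t) by (apply sqrt_sqrt; lra).
  assert (Hr2 : r * r = 2) by (apply sqrt_sqrt; lra).
  assert (HX : X * X = INR m) by (apply sqrt_sqrt, pos_INR).
  assert (HrU : r <= U) by (apply sqrt_le_1_alt; lra).
  assert (Hr1 : 1 <= r) by (rewrite <- sqrt_1; apply sqrt_le_1_alt; lra).
  assert (HU0 : 0 <= U) by apply sqrt_pos.
  set (w := 1 + a * (U - r)).
  assert (Hw1 : 1 <= w) by (unfold w; nra).
  assert (HXw : w <= X) by (unfold w; lra).
  assert (HXX : w * w <= X * X) by nra.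
  assert (Hk1 : 0 <= (r - 1) * w - r * a + 1) by nra.
  assert (Hk2 : r * w - a * U = (r - 1) * w - r * a + 1) by (unfold w; ring).
  assert (Hprod : 0 <= (r * w - a * U) * (r * w + a * U)) by (apply Rmult_le_pos; nra).
  assert (Hmain : / 2 * a ^ 2 * INR (t - 1) <= INR m).
  { rewrite minus_INR by lia. simpl INR at 2. rewrite <- HX, <- HU. nra. }
  apply Rle_trans with (/ 2 * a ^ 2 * INR (t - 1)); [|exact Hmain].
  apply Rmult_le_compat_r; [apply pos_INR|]. unfold C_e. apply Rmin_l.
Qed.
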